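(* Let $n,k$ be integers with $2\le k\le n-1$, let $\varepsilon,\delta>0$, and let $$m:=\frac{12n(n-1)^2}{\varepsilon^2(n-k)^2k}\ln\frac{2n^2}{\delta}.$$ Let $\mathcal{I}=(I_1,\dots,I_m)$ be a sequence of random $k$-element subsets of $[n]=\{1,\dots,n\}$, sampled independently and uniformly from all $k$-element subsets of $[n]$, and define $$\mathcal{S}_{\mathcal{I}}:=\{M\in\mathbb{R}^{n\times n}: M_{I_i}\succeq 0 \text{ for all } i\in[m]\}.$$ Then with probability at least $1-\delta$, $$\overline{\mathrm{dist}}_F(\mathcal{S}_{\mathcal{I}},\mathcal{S}^n_+)\le (1+\varepsilon)\frac{n-k}{n+k-2}.$$
   Context: For $M\in\mathbb{R}^{n\times n}$ and $J\subseteq[n]$, $M_J$ is the principal submatrix of $M$ with rows and columns indexed by $J$; $A\succeq 0$ means $A$ is a real symmetric positive semidefinite (PSD) matrix. $\mathcal{S}^n_+$ denotes the cone of $n\times n$ real symmetric PSD matrices. For a matrix $M$, $\mathrm{dist}_F(M,\mathcal{S}^n_+)=\inf_{N\in\mathcal{S}^n_+}\|M-N\|_F$, where $\|\cdot\|_F$ is the Frobenius norm. For a set $\mathcal{K}$ of $n\times n$ matrices, $\overline{\mathrm{dist}}_F(\mathcal{K},\mathcal{S}^n_+)=\sup_{M\in\mathcal{K},\ \|M\|_F=1}\mathrm{dist}_F(M,\mathcal{S}^n_+)$. *)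

(* Defs.v *)
From HB Require Import structures.
From mathcomp Require Import all_boot all_order all_algebra.
From mathcomp Require Import all_classical all_reals all_analysis.
Set Implicit Arguments. Unset Strict Implicit. Unset Printing Implicit Defensive.
Import Order.TTheory GRing.Theory Num.Theory.
Local Open Scope ring_scope.
Local Open Scope classical_set_scope.

Section Defs.
Variable R : realType.

Definition principal_submx (n : nat) (M : 'M[R]_n) (J : {set 'I_n}) : 'M[R]_#|J| :=
  \matrix_(i < #|J|, j < #|J|) M (enum_val i) (enum_val j).

Definition psd (p : nat) (A : 'M[R]_p) : Prop :=
  A^T = A /\ forall x : 'cV[R]_p, 0 <= (x^T *m A *m x) 0 0.

Definition frob_norm (p : nat) (A : 'M[R]_p) : R :=
  Num.sqrt (\sum_(i < p) \sum_(j < p) A i j ^+ 2).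

Definition dist_psd (p : nat) (M : 'M[R]_p) : R :=
  inf [set frob_norm (M - N) | N in [set N : 'M[R]_p | psd N]].

Definition dist_bar_psd (p : nat) (K : set 'M[R]_p) : R :=
  sup [set dist_psd M | M in [set M | K M /\ frob_norm M = 1]].

Definition S_of (n m : nat) (I : {ffun 'I_m -> {set 'I_n}}) : set 'M[R]_n :=
  [set M | forall i : 'I_m, psd (principal_submx M (I i))].

Definition ksubset_tuples (n m k : nat) : {set {ffun 'I_m -> {set 'I_n}}} :=
  [set I : {ffun 'I_m -> {set 'I_n}} | [forall i : 'I_m, #|I i| == k]].

(* probability of an event under the uniform (independent) distribution *)
Definition prob_tuples (n m k : nat) (E : {ffun 'I_m -> {set 'I_n}} -> Prop) : R :=
  #|[set I in ksubset_tuples n m k | `[< E I >] ]|%:R / #|ksubset_tuples n m k|%:R.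

End Defs.

(* Main.v *)
Require Import Defs.
From HB Require Import structures.
From mathcomp Require Import all_boot all_order all_algebra.
From mathcomp Require Import all_classical all_reals all_analysis.
From mathcomp.algebra_tactics Require Import ring lra.
From mathcomp Require Import zify.
Import Order.TTheory GRing.Theory Num.Theory.
Local Open Scope ring_scope.
Set Implicit Arguments. Unset Strict Implicit. Unset Printing Implicit Defensive.
Section A.
Variable R : realType.
Local Open Scope classical_set_scope.
Local Open Scope ring_scope.

Lemma L2 (v : R) : 0 <= v -> expR v * (1 - v) <= expR (- v) * (1 + v).
Proof.
move=> v0.
pose f := fun y : R => expR (- y) * (1 + y) - expR y * (1 - y).
have hd : forall x : R, is_derive x 1 f (x * (expR x - expR (- x))).
  move=> x; apply: is_derive_eq.
  rewrite /GRing.scale /=. ring.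
have [->|vp] := eqVneq v 0; first by rewrite oppr0 addr0.
have vp' : 0 < v by rewrite lt_def vp.
have fc : {within `[0, v], continuous f}.
  by apply: derivable_within_continuous => x _; exact: ex_derive.
have [c /[!in_itv] /= /andP[c0 cv] E] := @MVT R f _ 0 v vp' (fun x _ => hd x) fc.
move: E; rewrite /f !oppr0 expR0 !addr0 mulr1 subrr => E.
rewrite -subr_ge0 -[X in 0 <= X]subr0 E.
apply: mulr_ge0; last by rewrite ltW.
apply: mulr_ge0; first by rewrite ltW.
by rewrite subr_ge0 ler_expR ge0_cp // ltW.
Qed.
Lemma L1 (v : R) : 0 <= v -> 2 * v <= expR v - expR (- v).
Proof.
move=> v0.
pose f := fun y : R => expR y - expR (- y) - 2 * y.
have hd : forall x : R, is_derive x 1 f (expR x + expR (- x) - 2).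
  move=> x; apply: is_derive_eq.
  by rewrite mulrN1 opprK; congr (_ - _); exact: mulr1.
have [->|vp] := eqVneq v 0; first by rewrite mulr0 oppr0 subrr.
have vp' : 0 < v by rewrite lt_def vp.
have fc : {within `[0, v], continuous f}.
  by apply: derivable_within_continuous => x _; exact: ex_derive.
have [c /[!in_itv] /= /andP[c0 cv] E] := @MVT R f _ 0 v vp' (fun x _ => hd x) fc.
move: E; rewrite /f expR0 oppr0 expR0 mulr0 subrr subr0 => E.
rewrite -subr_ge0 (_ : _ - _ = f v - 0); last by rewrite /f subr0 addrAC.
rewrite E.
apply: mulr_ge0; last by rewrite addr0 ltW.
have h := expRxMexpNx_1 c.
have : 0 <= (expR c - 1) * (1 - expR (- c)).
  apply: mulr_ge0; rewrite subr_ge0.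
    by rewrite -expR0 ler_expR ltW.
  by rewrite expR_le1 oppr_le0 ltW.
rewrite mulrBl mulrBr mulrBr h !mul1r mulr1.
by move=> H; apply: le_trans H _; rewrite le_eqVlt; apply/orP; left; apply/eqP; ring.
Qed.

Lemma upper_ineq (e : R) : 0 <= e <= 1 -> e - (1 + e) * ln (1 + e) <= - (e ^+ 2 / 3).
Proof.
move=> /andP[e0 e1].
have h2 : 0 < 2 + e by lra.
pose y := e / (2 + e).
have y0 : 0 <= y by rewrite /y divr_ge0 // ltW.
have hy1 : 1 - y = 2 / (2 + e) by rewrite /y; field; lra.
have hy2 : 1 + y = (2 + 2 * e) / (2 + e) by rewrite /y; field; lra.
have H := @L2 y y0.
rewrite hy1 hy2 in H.
have H2 : expR y * 2 <= expR (- y) * (2 + 2 * e).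
  by move: H; rewrite !mulrA ler_pM2r ?invr_gt0.
have H3 : expR (y + y) <= 1 + e.
  rewrite expRD.
  have := ler_wpM2l (expR_ge0 y) H2.
  rewrite mulrA (mulrA (expR y)) expRxMexpNx_1 mul1r.
  move=> H4; lra.
have H5 : y + y <= ln (1 + e).
  rewrite -[X in X <= _](expRK (y + y)) ler_ln ?posrE ?expR_gt0 //; lra.
have hz : (y + y) * (2 + e) = 2 * e by rewrite /y; field; lra.
have H6 : (1 + e) * (y + y) <= (1 + e) * ln (1 + e) by rewrite ler_wpM2l //; lra.
nra.
Qed.

Lemma lower_ineq (e : R) : 0 <= e < 1 -> - e - (1 - e) * ln (1 - e) <= - (e ^+ 2 / 3).
Proof.
move=> /andP[e0 e1].
have hp : 0 < 1 - e by lra.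
pose v := - ln (1 - e).
have v0 : 0 <= v by rewrite /v oppr_ge0 ln_le0 //; lra.
have H := @L1 v v0.
have E1 : expR (- v) = 1 - e by rewrite /v opprK lnK.
have E2 : expR v = (1 - e)^-1 by rewrite -[v]opprK expRN E1.
rewrite E1 E2 in H.
have H2 : (1 - e) * (2 * v) <= 1 - (1 - e) ^+ 2.
  have := ler_wpM2l (ltW hp) H.
  by rewrite mulrBr mulfV ?gt_eqF // expr2.
rewrite /v in H2.
nra.
Qed.
End A.

Section M.
Variable R : realType.

Lemma qform p (A : 'M[R]_p) (x : 'cV[R]_p) :
  (x^T *m A *m x) 0 0 = \sum_i \sum_j x i 0 * A i j * x j 0.
Proof.
rewrite mxE exchange_big /=; apply: eq_bigr => j _.
rewrite mxE big_distrl /=; apply: eq_bigr => i _.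
by rewrite mxE.
Qed.

Definition pad n (M : 'M[R]_n) (J : {set 'I_n}) : 'M[R]_n :=
  \matrix_(i, j) (if (i \in J) && (j \in J) then M i j else 0).

Lemma pad_psd n (M : 'M[R]_n) J : psd (principal_submx M J) -> psd (pad M J).
Proof.
move=> [sym pos]; split.
  apply/matrixP => i j; rewrite !mxE.
  case: (boolP (i \in J)) => iJ; case: (boolP (j \in J)) => jJ //=.
  have := congr1 (fun (S : 'M[R]_(#|J|)) => S (enum_rank_in jJ j) (enum_rank_in iJ i)) sym.
  by rewrite /= !mxE !enum_rankK_in.
move=> x.
pose y : 'cV[R]_(#|J|) := \col_a x (enum_val a) 0.
have Hy := pos y; rewrite qform in Hy; rewrite qform.
have -> : \sum_i \sum_j x i 0 * (pad M J) i j * x j 0 =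
    \sum_(i in J) \sum_(j in J) x i 0 * M i j * x j 0.
  rewrite [RHS]big_mkcond; apply: eq_bigr => i _; rewrite [in RHS]big_mkcond /=.
  case: (boolP (i \in J)) => iJ.
    apply: eq_bigr => j _; rewrite mxE iJ /=; case: (j \in J) => //=.
    by rewrite mulr0 mul0r.
  by rewrite big1 // => j _; rewrite mxE (negbTE iJ) /= mulr0 mul0r.
rewrite (big_enum_val (fun i => \sum_(j in J) x i 0 * M i j * x j 0)) /=.
under eq_bigr do rewrite (big_enum_val (fun j => _ * M _ j * x j 0)) /=.
apply: (le_trans Hy); rewrite le_eqVlt; apply/orP; left; apply/eqP.
apply: eq_bigr => i _; apply: eq_bigr => j _; by rewrite !mxE.
Qed.

Lemma psd0 p : psd (0 : 'M[R]_p).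
Proof.
split; first by rewrite trmx0.
by move=> x; rewrite mulmx0 mul0mx mxE.
Qed.

Lemma psdD p (A B : 'M[R]_p) : psd A -> psd B -> psd (A + B).
Proof.
move=> [sA pA] [sB pB]; split; first by rewrite linearD /= sA sB.
by move=> x; rewrite mulmxDr mulmxDl mxE addr_ge0.
Qed.

Lemma psdZ p (s : R) (A : 'M[R]_p) : 0 <= s -> psd A -> psd (s *: A).
Proof.
move=> s0 [sA pA]; split; first by rewrite linearZ /= sA.
by move=> x; rewrite -scalemxAr -scalemxAl mxE mulr_ge0.
Qed.


Lemma pad_sum_entry n m (M : 'M[R]_n) (I : {ffun 'I_m -> {set 'I_n}}) a b :
  (\sum_(i < m) pad M (I i)) a b =
  M a b *+ #|[set i | (a \in I i) && (b \in I i)]|.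
Proof.
rewrite summxE.
under eq_bigr do rewrite mxE.
rewrite -big_mkcond /= sumr_const; congr (_ *+ _).
by apply: eq_card => i; rewrite finset.inE.
Qed.

Lemma frob_ge0 p (A : 'M[R]_p) : 0 <= frob_norm A.
Proof. exact: sqrtr_ge0. Qed.

Lemma dist_psd_le p (M N : 'M[R]_p) : psd N -> dist_psd M <= frob_norm (M - N).
Proof.
move=> hN; apply: ge_inf; last by exists N.
by exists 0 => _ [N' _ <-]; exact: frob_ge0.
Qed.

Lemma det_bound n m (I : {ffun 'I_m -> {set 'I_n}}) (s B : R) :
  0 <= s -> 0 <= B ->
  (forall a b : 'I_n, `|1 - s * (#|[set i | (a \in I i) && (b \in I i)]|)%:R| <= B) ->
  dist_bar_psd (S_of I) <= B.
Proof.
move=> s0 B0 hc; rewrite /dist_bar_psd.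
set E := [set dist_psd M | M in _]%classic.
have [->|/set0P ne] := eqVneq E set0; first by rewrite sup0.
apply: ge_sup => // _ [M [SM nM] <-].
pose N := s *: \sum_(i < m) pad M (I i).
have hN : psd N.
  apply: psdZ => //; apply: (big_ind (fun A => psd A)); first exact: psd0.
    by move=> A B' hA hB; exact: psdD.
  by move=> i _; apply: pad_psd; exact: SM.
apply: (le_trans (dist_psd_le M hN)).
have S0 : 0 <= \sum_i \sum_j M i j ^+ 2.
  by apply: sumr_ge0 => i _; apply: sumr_ge0 => j _; exact: sqr_ge0.
have hs : \sum_i \sum_j M i j ^+ 2 = 1.
  by rewrite -(sqr_sqrtr S0); move: nM; rewrite /frob_norm => ->; rewrite expr1n.
rewrite /frob_norm -(ger0_norm B0) -sqrtr_sqr.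
rewrite ler_sqrt; last by rewrite exprn_ge0.
rewrite -[X in _ <= X]mulr1 -hs mulr_sumr; apply: ler_sum => a _.
rewrite mulr_sumr; apply: ler_sum => b _.
rewrite !mxE pad_sum_entry -mulr_natl mulrA -[X in X - _]mul1r -mulrBl.
rewrite exprMn; apply: ler_wpM2r; first exact: sqr_ge0.
rewrite -[X in X <= _]real_normK ?num_real // lerXn2r ?nnegrE ?normr_ge0 //.
Qed.

End M.

Lemma binA1 n k : (1 <= k <= n)%N -> (n * 'C(n - 1, n - k) = k * 'C(n, k))%N.
Proof.
case: k => // k; case: n => // n /andP[_ kn].
rewrite subn1 /= subSS bin_sub //.
exact: mul_bin_diag.
Qed.

Lemma binA2 n k : (2 <= k <= n)%N -> (n * (n - 1) * 'C(n - 2, n - k) = k * (k - 1) * 'C(n, k))%N.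
Proof.
case: k => // [] // k; case: k => // k.
case: n => // n; case: n => // n /andP[_ kn].
have e1 : (n.+2 - 1 = n.+1)%N by lia.
have e2 : (n.+2 - 2 = n)%N by lia.
have e3 : (n.+2 - k.+2 = n - k)%N by lia.
have e4 : (k.+2 - 1 = k.+1)%N by lia.
rewrite e1 e2 e3 e4 bin_sub; last lia.
have h1 := mul_bin_diag n.+1 k; have h2 := mul_bin_diag n.+2 k.+1.
rewrite /= in h1 h2.
by rewrite -mulnA h1 mulnCA h2 mulnA (mulnC k.+1).
Qed.

Section P.
Variable R : realType.
Variables (n m k : nat).

Definition Kset : {set {set 'I_n}} := [set J : {set 'I_n} | #|J| == k].
Notation T := (ksubset_tuples n m k).

Lemma inT (I : {ffun 'I_m -> {set 'I_n}}) : (I \in T) = [forall i, I i \in Kset].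
Proof. by rewrite finset.inE; apply/forallP/forallP => h i; have := h i; rewrite finset.inE. Qed.

Lemma prod_sum (w : {set 'I_n} -> R) :
  \sum_(I in T) \prod_(i < m) w (I i) = (\sum_(J in Kset) w J) ^+ m.
Proof.
rewrite -[m in RHS]card_ord -prodr_const bigA_distr_big.
apply: eq_bigl => I; rewrite inT; apply/forallP/familyP => h i; by have := h i.
Qed.

Lemma card_T : #|T|%:R = (#|Kset|%:R : R) ^+ m.
Proof.
have := prod_sum (fun _ => 1).
under eq_bigr do rewrite big1_eq.
by rewrite !sumr_const => ->.
Qed.


Lemma card_setR (U : finType) (S : {set U}) (P : pred U) :
  (#|[set x in S | P x]|)%:R = \sum_(x in S) (P x)%:R :> R.
Proof.
rewrite -sum1_card natr_sum [RHS]big_mkcond [LHS]big_mkcond; apply: eq_bigr => x _.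
by rewrite finset.inE; case: (x \in S); case: (P x).
Qed.

Definition Xc (A : {set 'I_n}) (I : {ffun 'I_m -> {set 'I_n}}) : nat :=
  #|[set i | A \subset I i]|.

Lemma Xc_sum (A : {set 'I_n}) I : (Xc A I)%:R = \sum_(i < m) (A \subset I i)%:R :> R.
Proof.
rewrite /Xc -sum1_card natr_sum [LHS]big_mkcond; apply: eq_bigr => i _.
by rewrite finset.inE; case: (A \subset I i).
Qed.

Lemma mgf (A : {set 'I_n}) (l : R) : \sum_(I in T) expR (l * (Xc A I)%:R) =
   (\sum_(J in Kset) expR (l * (A \subset J)%:R)) ^+ m.
Proof.
rewrite -prod_sum; apply: eq_bigr => I _.
by rewrite Xc_sum mulr_sumr expR_sum.
Qed.

Definition KA (A : {set 'I_n}) := [set J in Kset | A \subset J].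

Lemma sumK (A : {set 'I_n}) (l : R) : \sum_(J in Kset) expR (l * (A \subset J)%:R) =
   #|Kset|%:R + (expR l - 1) * #|KA A|%:R.
Proof.
rewrite /KA card_setR mulr_sumr -sumr_const -big_split /=; apply: eq_bigr => J _.
by case: (A \subset J); rewrite /= ?mulr1 ?mulr0 ?expR0 ?addr0 // addrC subrK.
Qed.

Lemma markov (A : {set 'I_n}) (l a : R) (P : pred {ffun 'I_m -> {set 'I_n}}) :
  (forall I, P I -> l * a <= l * (Xc A I)%:R) ->
  #|[set I in T | P I]|%:R * expR (l * a) <= \sum_(I in T) expR (l * (Xc A I)%:R).
Proof.
move=> hP; rewrite card_setR mulr_suml; apply: ler_sum => I _.
case: (boolP (P I)) => h; rewrite /= ?mul1r ?mul0r ?expR_ge0 //.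
by rewrite ler_expR hP.
Qed.

Lemma chernoff_gen (A : {set 'I_n}) (l a : R) (P : pred {ffun 'I_m -> {set 'I_n}}) :
  (0 < #|Kset|)%N ->
  (forall I, P I -> l * a <= l * (Xc A I)%:R) ->
  #|[set I in T | P I]|%:R <= #|T|%:R *
     expR (m%:R * (#|KA A|%:R / #|Kset|%:R) * (expR l - 1) - l * a) :> R.
Proof.
move=> K0 hP.
have hK : 0 < #|Kset|%:R :> R by rewrite ltr0n.
set q := #|KA A|%:R / #|Kset|%:R.
have q0 : 0 <= q by rewrite /q divr_ge0 // ler0n.
have q1 : q <= 1.
  rewrite /q ler_pdivrMr // mul1r ler_nat; apply: subset_leq_card.
  by apply/fintype.subsetP => J; rewrite finset.inE => /andP[].
have H := markov hP; rewrite mgf sumK in H.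
have E : #|Kset|%:R + (expR l - 1) * #|KA A|%:R = #|Kset|%:R * (1 + q * (expR l - 1)) :> R.
  by rewrite /q; field; rewrite gt_eqF.
rewrite E exprMn -card_T in H.
have H2 : (1 + q * (expR l - 1)) ^+ m <= expR (m%:R * (q * (expR l - 1))).
  rewrite expRM_natl; apply: lerXn2r; rewrite ?nnegrE ?expR_ge0 ?expR_ge1Dx //.
  have := expR_gt0 l; nra.
have T0 : 0 <= #|T|%:R :> R by rewrite ler0n.
rewrite -mulrA expRD expRN mulrA.
rewrite ler_pdivlMr ?expR_gt0 //; apply: (le_trans H).
by rewrite ler_wpM2l.
Qed.


Definition mu (A : {set 'I_n}) : R := m%:R * (#|KA A|%:R / #|Kset|%:R).

Lemma mu_ge0 A : 0 <= mu A.
Proof. by rewrite /mu mulr_ge0 ?ler0n ?divr_ge0 ?ler0n. Qed.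

Lemma tail_up (A : {set 'I_n}) (e : R) : 0 <= e <= 1 -> (0 < #|Kset|)%N ->
  #|[set I in T | (1 + e) * mu A <= (Xc A I)%:R]|%:R <= #|T|%:R * expR (- (mu A * (e ^+ 2 / 3))).
Proof.
move=> /andP[e0 e1] K0.
have l0 : 0 <= ln (1 + e) by apply: ln_ge0; lra.
apply: (le_trans (@chernoff_gen A (ln (1 + e)) ((1 + e) * mu A) (fun I => (1 + e) * mu A <= (Xc A I)%:R) K0 _)).
  by move=> I; rewrite /= => h; rewrite ler_wpM2l.
rewrite ler_wpM2l ?ler0n // ler_expR lnK ?posrE; last lra.
have := upper_ineq (e := e); rewrite e0 e1 => /(_ isT) H.
have := ler_wpM2l (mu_ge0 A) H.
move=> H2; rewrite -[X in _ <= X]mulrN; apply: le_trans; last exact: H2.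
rewrite le_eqVlt; apply/orP; left; apply/eqP; rewrite /mu; ring.
Qed.

Lemma tail_lo (A : {set 'I_n}) (e : R) : 0 <= e < 1 -> (0 < #|Kset|)%N ->
  #|[set I in T | (Xc A I)%:R <= (1 - e) * mu A]|%:R <= #|T|%:R * expR (- (mu A * (e ^+ 2 / 3))).
Proof.
move=> /andP[e0 e1] K0.
have l0 : ln (1 - e) <= 0 by apply: ln_le0; lra.
apply: (le_trans (@chernoff_gen A (ln (1 - e)) ((1 - e) * mu A) (fun I => (Xc A I)%:R <= (1 - e) * mu A) K0 _)).
  by move=> I; rewrite /= => h; rewrite ler_wnM2l.
rewrite ler_wpM2l ?ler0n // ler_expR lnK ?posrE; last lra.
have := lower_ineq (e := e); rewrite e0 e1 => /(_ isT) H.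
have := ler_wpM2l (mu_ge0 A) H.
move=> H2; rewrite -[X in _ <= X]mulrN; apply: le_trans; last exact: H2.
rewrite le_eqVlt; apply/orP; left; apply/eqP; rewrite /mu; ring.
Qed.

Lemma bool_sum (b c : bool) : b || c -> (1 : R) <= b%:R + c%:R.
Proof. by rewrite -natrD ler1n; case: b; case: c. Qed.

Lemma tail_both (A : {set 'I_n}) (e : R) : 0 <= e < 1 -> (0 < #|Kset|)%N ->
  #|[set I in T | ~~ (((1 - e) * mu A <= (Xc A I)%:R) && ((Xc A I)%:R <= (1 + e) * mu A))]|%:R
    <= 2 * (#|T|%:R * expR (- (mu A * (e ^+ 2 / 3)))).
Proof.
move=> /andP[e0 e1] K0.
have Hu := @tail_up A e ltac:(by rewrite e0 ltW) K0.
have Hl := @tail_lo A e ltac:(by rewrite e0 e1) K0.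
rewrite mulr_natl mulr2n; apply: le_trans; last exact: (lerD Hl Hu).
rewrite !card_setR -big_split /=; apply: ler_sum => I _.
set X := (Xc A I)%:R.
have [h1|h1] := leP ((1 - e) * mu A) X; have [h2|h2] := leP X ((1 + e) * mu A) => /=;
  rewrite ?ler0n ?addr_ge0 //.
all: apply: bool_sum; by rewrite ?(ltW h1) ?(ltW h2) ?orbT.
Qed.

Lemma card_K : #|Kset| = 'C(n, k).
Proof. by rewrite /Kset card_draws card_ord. Qed.

Lemma card_KA (A : {set 'I_n}) : (k <= n)%N -> #|KA A| = 'C(n - #|A|, n - k).
Proof.
move=> kn.
have -> : KA A = (@finset.setC _) @^-1: [set J' : {set 'I_n} | J' \subset ~: A & #|J'| == (n - k)%N].
  apply/setP => J; rewrite !finset.inE finset.setCS andbC; congr (_ && _).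
  have hJ := cardsC J; rewrite card_ord in hJ.
  by apply/eqP/eqP => ?; lia.
rewrite card_preimset; last exact: finset.setC_inj.
rewrite cards_draws; congr 'C(_, _).
by have := cardsC A; rewrite card_ord; lia.
Qed.


Definition withinb (eta : 'I_n -> 'I_n -> R) (a b : 'I_n) (I : {ffun 'I_m -> {set 'I_n}}) :=
  ((1 - eta a b) * mu [set a; b] <= (Xc [set a; b] I)%:R) &&
  ((Xc [set a; b] I)%:R <= (1 + eta a b) * mu [set a; b]).

Definition good eta I := [forall a, [forall b, withinb eta a b I]].

Lemma sum_nonneg_bool (U : finType) (f : U -> bool) : 0 <= \sum_(x : U) (f x)%:R :> R.
Proof. by apply: sumr_ge0 => x _; rewrite ler0n. Qed.

Lemma bad_bound eta (L : R) : (forall a b, 0 <= eta a b < 1) ->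
  (forall a b, L <= mu [set a; b] * (eta a b ^+ 2 / 3)) -> (0 < #|Kset|)%N ->
  #|[set I in T | ~~ good eta I]|%:R <= (n * n)%:R * (2 * (#|T|%:R * expR (- L))).
Proof.
move=> he hL K0.
apply: (@le_trans _ _ (\sum_(a : 'I_n) \sum_(b : 'I_n)
     #|[set I in T | ~~ withinb eta a b I]|%:R)).
  rewrite card_setR.
  have E1 : forall a b, #|[set I in T | ~~ withinb eta a b I]|%:R =
     \sum_(I in T) (~~ withinb eta a b I)%:R :> R by move=> a b; exact: card_setR.
  have E2 : forall a, \sum_b \sum_(I in T) (~~ withinb eta a b I)%:R =
     \sum_(I in T) \sum_b (~~ withinb eta a b I)%:R :> R by move=> a; exact: exchange_big.
  rewrite (eq_bigr _ (fun a _ => eq_bigr _ (fun b _ => E1 a b))).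
  rewrite (eq_bigr _ (fun a _ => E2 a)) exchange_big /=.
  apply: ler_sum => I _.
  case: (boolP (good eta I)) => g /=.
    by apply: sumr_ge0 => a _; exact: sum_nonneg_bool.
  move: g; rewrite /good => /forallPn [a /forallPn [b hb]].
  rewrite (bigD1 a) //= (bigD1 b) //= hb /=.
  have r1 : 0 <= \sum_(i | i != b) (~~ withinb eta a i I)%:R :> R.
    by apply: sumr_ge0 => x _; rewrite ler0n.
  have r2 : 0 <= \sum_(i | i != a) \sum_(b0 : 'I_n) (~~ withinb eta i b0 I)%:R :> R.
    by apply: sumr_ge0 => x _; exact: sum_nonneg_bool.
  lra.
have -> : (n * n)%:R * (2 * (#|T|%:R * expR (- L))) =
   \sum_(a : 'I_n) \sum_(b : 'I_n) (2 * (#|T|%:R * expR (- L))) :> R.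
  rewrite (eq_bigr (fun _ => (2 * (#|T|%:R * expR (- L))) *+ n)); last first.
    by move=> a _; rewrite sumr_const card_ord.
  by rewrite sumr_const card_ord -mulrnA mulr_natl.
apply: ler_sum => a _; apply: ler_sum => b _.
rewrite /withinb; apply: le_trans; first exact: (@tail_both [set a; b] (eta a b) (he a b) K0).
rewrite ler_wpM2l // ler_wpM2l ?ler0n // ler_expR lerN2.
exact: hL.
Qed.

Lemma mu_pair (a b : 'I_n) : (2 <= k)%N -> (k < n)%N ->
  mu [set a; b] = if a == b then m%:R * k%:R / n%:R
                  else m%:R * (k%:R * (k%:R - 1)) / (n%:R * (n%:R - 1)).
Proof.
move=> k2 kn.
have cK : 0 < 'C(n, k)%:R :> R by rewrite ltr0n bin_gt0 ltnW.
have n0 : 0 < n%:R :> R by rewrite ltr0n; lia.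
rewrite /mu card_KA ?(ltnW kn) // finset.cards2 card_K.
have [ab|ab] := eqVneq a b => /=.
  have h := binA1 (n := n) (k := k) ltac:(lia).
  have h' := congr1 (fun x : nat => x%:R : R) h; rewrite /= !natrM in h'.
  have -> : 'C(n - 1, n - k)%:R = k%:R * 'C(n, k)%:R / n%:R :> R.
    by rewrite -h'; field; rewrite gt_eqF.
  by field; rewrite !gt_eqF.
have h := binA2 (n := n) (k := k) ltac:(lia).
have h' := congr1 (fun x : nat => x%:R : R) h; rewrite /= !natrM !natrB ?(leq_trans _ k2) ?(ltnW (leq_trans _ kn)) // in h'; last by lia.
have n1 : 0 < n%:R - 1 :> R by rewrite subr_gt0 ltr1n; lia.
have -> : 'C(n - 2, n - k)%:R = k%:R * (k%:R - 1) * 'C(n, k)%:R / (n%:R * (n%:R - 1)) :> R.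
  by rewrite -h'; field; rewrite !gt_eqF.
by field; rewrite !gt_eqF.
Qed.
End P.




Lemma prob_lb (R : realType) n m k (E : {ffun 'I_m -> {set 'I_n}} -> Prop)
   (G : pred {ffun 'I_m -> {set 'I_n}}) (d : R) :
  (forall I, I \in ksubset_tuples n m k -> G I -> E I) ->
  (0 < #|ksubset_tuples n m k|)%N ->
  #|[set I in ksubset_tuples n m k | ~~ G I]|%:R <= d * #|ksubset_tuples n m k|%:R ->
  1 - d <= @prob_tuples R n m k E.
Proof.
move=> hGE T0 hb.
have hT : 0 < #|ksubset_tuples n m k|%:R :> R by rewrite ltr0n.
rewrite /prob_tuples ler_pdivlMr //.
have h1 : (#|[set I in ksubset_tuples n m k | G I]| <=
          #|[set I in ksubset_tuples n m k | `[< E I >] ]|)%N.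
  apply: subset_leq_card; apply/fintype.subsetP => I; rewrite !finset.inE.
  case/andP => IT GI; apply/andP; split => //; apply/asboolP; apply: hGE => //; by rewrite finset.inE.
have h2 : #|ksubset_tuples n m k|%:R =
   #|[set I in ksubset_tuples n m k | G I]|%:R + #|[set I in ksubset_tuples n m k | ~~ G I]|%:R :> R.
  rewrite !card_setR -big_split /= -sum1_card natr_sum.
  by apply: eq_bigr => I _; case: (G I); rewrite /= ?addr0 ?add0r.
have h3 := h1; rewrite -(ler_nat R) in h3.
rewrite h2 in hb *; lra.
Qed.

Lemma abs_gen (R : realType) (s X mu t e q eps : R) : 0 < s ->
  (1 - e) * mu <= X -> X <= (1 + e) * mu -> s * mu = t ->
  (1 - t = - q \/ 1 - t = q) -> t * e = eps * q -> 0 <= q -> 0 <= eps ->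
  `|1 - s * X| <= (1 + eps) * q.
Proof.
move=> s0 h1 h2 hst ht hte q0 e0.
have h1' : t - t * e <= s * X.
  have := ler_wpM2l (ltW s0) h1; rewrite (_ : s * ((1 - e) * mu) = t - t * e) //.
  by rewrite -hst; ring.
have h2' : s * X <= t + t * e.
  have := ler_wpM2l (ltW s0) h2; rewrite (_ : s * ((1 + e) * mu) = t + t * e) //.
  by rewrite -hst; ring.
have eq0 : 0 <= eps * q by rewrite mulr_ge0.
rewrite ler_norml; case: ht => ht; apply/andP; split; nra.
Qed.

Unset Implicit Arguments.
Set Strict Implicit.

Theorem theorem5 (R : realType) (n k : nat) (eps delta : R) (m : nat) :
  (2 <= k)%N -> (k <= n - 1)%N -> 0 < eps -> 0 < delta ->
  12 * n%:R * (n%:R - 1) ^+ 2 / (eps ^+ 2 * (n%:R - k%:R) ^+ 2 * k%:R)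
    * ln (2 * n%:R ^+ 2 / delta) <= m%:R ->
  1 - delta <= @prob_tuples R n m k (fun I =>
     dist_bar_psd (@S_of R n m I) <= (1 + eps) * ((n%:R - k%:R) / (n%:R + k%:R - 2))).
Proof.
move=> hk2 hkn e0 d0 hm.
have kn : (k < n)%N by lia.
have K0 : (0 < #|Kset n k|)%N by rewrite card_K bin_gt0 ltnW.
have T0 : (0 < #|ksubset_tuples n m k|)%N.
  by rewrite -(ltr0n R) card_T exprn_gt0 // ltr0n.
have hN3 : (3 : R) <= n%:R by rewrite (ler_nat R 3 n); lia.
have hK2 : (2 : R) <= k%:R by rewrite (ler_nat R 2 k).
have hKN : k%:R + 1 <= n%:R :> R.
  by rewrite -[1 in X in X <= _]/(1%:R) -natrD ler_nat addn1.
have [d1|d1] := leP 1 delta.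
  apply: (@le_trans _ _ 0); first lra.
  by rewrite /prob_tuples divr_ge0 // ler0n.
set q := (n%:R - k%:R) / (n%:R + k%:R - 2).
have hden : 0 < n%:R + k%:R - 2 :> R by lra.
have q0 : 0 <= q by rewrite /q divr_ge0 //; lra.
have B0 : 0 <= (1 + eps) * q by rewrite mulr_ge0 //; lra.
have [B1|B1] := leP 1 ((1 + eps) * q).
  apply: (@prob_lb R n m k _ predT delta) => //.
    move=> I _ _; apply: (@det_bound _ _ _ _ 0) => // a b.
    by rewrite mul0r subr0 normr1.
  rewrite card_setR big1 ?mulr_ge0 ?ler0n //; first lra.
have hN1 : 0 < n%:R - 1 :> R by lra.
have hK1 : 0 < k%:R - 1 :> R by lra.
have hNK : 0 < n%:R - k%:R :> R by lra.
have hNp : 0 < n%:R :> R by lra.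
have hKp : 0 < k%:R :> R by lra.
have harg : 1 < 2 * n%:R ^+ 2 / delta.
  rewrite ltr_pdivlMr // mul1r; nra.
set L := ln (2 * n%:R ^+ 2 / delta) in hm.
have L0 : 0 < L by rewrite /L ln_gt0.
have hexp : expR (- L) = delta / (2 * n%:R ^+ 2).
  rewrite expRN /L lnK ?posrE; last lra.
  by rewrite invf_div.
have hD : 0 < eps ^+ 2 * (n%:R - k%:R) ^+ 2 * k%:R by rewrite !mulr_gt0 // exprn_gt0.
have key : L * (12 * n%:R * (n%:R - 1) ^+ 2) <= m%:R * (eps ^+ 2 * (n%:R - k%:R) ^+ 2 * k%:R).
  move: hm; rewrite mulrAC ler_pdivrMr // => h; lra.
have M0 : 0 < m%:R :> R.
  have : 0 < L * (12 * n%:R * (n%:R - 1) ^+ 2) by rewrite mulr_gt0 // !mulr_gt0 // exprn_gt0.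
  move=> h; have h2 := lt_le_trans h key.
  by move: h2; rewrite pmulr_lgt0.
pose ed := eps * (n%:R - k%:R) / (2 * (n%:R - 1)).
pose eo := eps * (n%:R - k%:R) / (2 * (k%:R - 1)).
pose eta := fun a b : 'I_n => if a == b then ed else eo.
have eo1 : eo < 1.
  move: B1; rewrite /q mulrA ltr_pdivrMr // mul1r => h.
  rewrite /eo ltr_pdivrMr ?mulr_gt0 // mul1r; lra.
have ed0 : 0 <= ed by rewrite /ed divr_ge0 ?mulr_ge0 //; lra.
have eo0 : 0 <= eo by rewrite /eo divr_ge0 ?mulr_ge0 //; lra.
have edo : ed <= eo.
  rewrite /ed /eo ler_pdivrMr ?mulr_gt0 // mulrAC ler_pdivlMr ?mulr_gt0 //.
  have : 0 <= eps * (n%:R - k%:R) by rewrite mulr_ge0 //; lra.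
  nra.
have he : forall a b, 0 <= eta a b < 1.
  move=> a b; rewrite /eta; case: (a == b); apply/andP; split => //.
  exact: le_lt_trans edo eo1.
have hL : forall a b, L <= mu R m k [set a; b] * (eta a b ^+ 2 / 3).
  move=> a b; rewrite mu_pair //; rewrite /eta; case: (a == b).
    have -> : m%:R * k%:R / n%:R * (ed ^+ 2 / 3) =
        m%:R * (eps ^+ 2 * (n%:R - k%:R) ^+ 2 * k%:R) / (12 * n%:R * (n%:R - 1) ^+ 2).
      rewrite /ed; field; do ?split; rewrite gt_eqF //; lra.
    rewrite ler_pdivlMr; first lra.
    by rewrite !mulr_gt0 // exprn_gt0.
  have -> : m%:R * (k%:R * (k%:R - 1)) / (n%:R * (n%:R - 1)) * (eo ^+ 2 / 3) =
      m%:R * (eps ^+ 2 * (n%:R - k%:R) ^+ 2 * k%:R) / (12 * n%:R * (n%:R - 1) * (k%:R - 1)).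
    rewrite /eo; field; do ?split; rewrite gt_eqF //; lra.
  rewrite ler_pdivlMr; last by rewrite !mulr_gt0.
  apply: le_trans key.
  rewrite ler_wpM2l ?(ltW L0) // expr2 mulrA ler_wpM2l ?mulr_ge0 //; lra.
apply: (@prob_lb R n m k _ (good k eta) delta) => //; last first.
  apply: le_trans; first exact: (bad_bound he hL K0).
  rewrite hexp natrM le_eqVlt; apply/orP; left; apply/eqP.
  field; rewrite gt_eqF //; lra.
move=> I _ gI.
pose t0 : R := 2 * (n%:R - 1) / (n%:R + k%:R - 2).
pose md : R := m%:R * k%:R / n%:R.
have md0 : 0 < md by rewrite /md !mulr_gt0 // invr_gt0.
have t00 : 0 < t0 by rewrite /t0 !mulr_gt0 // invr_gt0.
have s0 : 0 < t0 / md by rewrite mulr_gt0 // invr_gt0.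
apply: (@det_bound _ _ _ _ (t0 / md)) => //; first exact: ltW.
move=> a b.
have w := gI; move/forallP/(_ a)/forallP/(_ b): w => w.
rewrite /withinb /= mu_pair // in w.
have -> : #|[set i | (a \in I i) && (b \in I i)]| = Xc [set a; b] I.
  rewrite /Xc; apply: eq_card => i.
  by rewrite !finset.inE finset.subUset !finset.sub1set.
move: w; rewrite /eta; case: (a == b) => /andP[w1 w2].
  apply: (@abs_gen R (t0 / md) _ _ t0 ed q eps s0 w1 w2).
  - by rewrite /md; field; do ?split; rewrite gt_eqF //; lra.
  - by left; rewrite /t0 /q; field; rewrite gt_eqF.
  - by rewrite /t0 /ed /q; field; do ?split; rewrite gt_eqF //; lra.
  - exact: q0.
  - exact: ltW.
apply: (@abs_gen R (t0 / md) _ _ (2 * (k%:R - 1) / (n%:R + k%:R - 2)) eo q eps s0 w1 w2).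
- by rewrite /md /t0; field; do ?split; rewrite gt_eqF //; lra.
- by right; rewrite /q; field; rewrite gt_eqF.
- by rewrite /eo /q; field; do ?split; rewrite gt_eqF //; lra.
- exact: q0.
- exact: ltW.
Qed.
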